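(* Let $n\ge 4$ and let $f:\{0,1\}^n\to\{0,1\}$ be fully sensitive at $0$, and let $p$ be its symmetrization polynomial. Then \[ \sup_{x\in[0,n]} |p'''(x)| \geq 1 - p(3). \]
   Context: $f$ is fully sensitive at $0$ if $f(0^n)=0$ and $f(e_i)=1$ for every $i=1,\dots,n$, where $e_i$ is the $i$-th unit vector. Let $q$ be the unique multilinear real polynomial agreeing with $f$ on $\{0,1\}^n$, of degree $d(f)$. The symmetrization polynomial of $f$ is the univariate real polynomial $p$ of degree at most $d(f)$ such that $p(x_1+\dots+x_n) = \frac{1}{n!}\sum_{\pi\in S_n} q(\pi(x))$ for all $x\in\{0,1\}^n$, where $\pi(x)$ permutes the coordinates of $x$; equivalently, for $k=0,\dots,n$, $p(k)$ is the fraction of inputs of Hamming weight $k$ on which $f$ equals $1$ (such $p$ exists and is unique). *)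

(* Defs.v *)
From mathcomp Require Import all_boot all_order all_algebra.
Set Implicit Arguments. Unset Strict Implicit. Unset Printing Implicit Defensive.
Import Order.TTheory GRing.Theory Num.Theory.

Definition hweight (n : nat) (x : {ffun 'I_n -> bool}) : nat := #|[set i | x i]|.

Definition zero_pt (n : nat) : {ffun 'I_n -> bool} := [ffun _ => false].
Definition unit_pt (n : nat) (i : 'I_n) : {ffun 'I_n -> bool} := [ffun j => j == i].

Definition fully_sensitive_at0 (n : nat) (f : {ffun 'I_n -> bool} -> bool) : Prop :=
  f (zero_pt n) = false /\ forall i : 'I_n, f (unit_pt i) = true.

Definition frac_ones (R : fieldType) (n : nat) (f : {ffun 'I_n -> bool} -> bool) (k : nat) : R :=
  (#|[set x | (hweight (x : {ffun 'I_n -> bool}) == k) && f x]|%:R / #|[set x | hweight (x : {ffun 'I_n -> bool}) == k]|%:R)%R.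

(* p is the symmetrization polynomial of f: a real polynomial of degree at most n
   (d(f) <= n, and interpolation on 0..n by degree <= n is unique) with
   p(k) = frac_ones f k for k = 0..n. *)
Definition symmetrization_poly (R : fieldType) (n : nat) (f : {ffun 'I_n -> bool} -> bool)
  (p : {poly R}) : Prop :=
  (size p <= n.+1)%N /\ forall k : nat, (k <= n)%N -> (p.[k%:R] = frac_ones R f k)%R.

(* Main.v *)
Require Import Defs.
From mathcomp Require Import all_boot all_order all_algebra.
From mathcomp Require Import all_classical all_reals.
From mathcomp Require polyrcf.
From mathcomp Require Import ring lra zify.
Import Order.TTheory GRing.Theory Num.Theory.
Local Open Scope ring_scope.

Section S.
Variable R : realType.
Definition Dl (q : {poly R}) := q \Po ('X + 1%:P) - q.

Lemma Dl_horner q x : (Dl q).[x] = q.[x+1] - q.[x].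
Proof. by rewrite /Dl hornerD hornerN horner_comp !hornerE. Qed.

Lemma Dl_deriv q : (Dl q)^`() = Dl q^`().
Proof. by rewrite /Dl derivB deriv_comp derivD derivX derivC addr0 mulr1. Qed.

Lemma Dl_derivn k q : (Dl q)^`(k) = Dl (q^`(k)).
Proof. elim: k => [//|k IH]; by rewrite !derivnS IH Dl_deriv. Qed.

Lemma key k : forall q a, exists2 c, a <= c <= a + k%:R & (iter k Dl q).[a] = (q^`(k)).[c].
Proof.
elim: k => [|k IH] q a.
  by exists a; rewrite ?addr0 ?lexx.
rewrite iterSr; have [c0 /andP[h1 h2] ->] := IH (Dl q) a.
rewrite Dl_derivn Dl_horner.
have lt : c0 < c0 + 1 by rewrite ltrDl.
have [c /andP[c1 c2] ->] := polyrcf.poly_mvt (q^`(k)) lt.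
exists c; last by rewrite derivnS addrAC subrr add0r mulr1.
rewrite (le_trans h1 (ltW c1)) /= (le_trans (ltW c2)) //.
by rewrite -natr1 addrA lerD2r.
Qed.

Lemma D3 p (m : nat) : (iter 3 Dl p).[m%:R] =
  p.[(m+3)%:R] - 3%:R * p.[(m+2)%:R] + 3%:R * p.[(m+1)%:R] - p.[m%:R].
Proof.
rewrite /= !Dl_horner !natrD.
have e2 : m%:R + 1 + 1 = m%:R + 2%:R :> R by rewrite -addrA.
have e3 : m%:R + 1 + 1 + 1 = m%:R + 3%:R :> R by rewrite e2 -addrA natr1.
rewrite e3 e2.
set a := p.[_ + 3%:R]; set b := p.[_ + 2%:R]; set c := p.[_ + 1]; set d := p.[_%:R].
rewrite !mulr_natl !mulrS !mulr0n.
by rewrite !addr0; ring.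
Qed.

Lemma fracE n (f : {ffun 'I_n -> bool} -> bool) k : frac_ones R f k = #|[set x : {ffun 'I_n -> bool} | (hweight x == k) && f x]|%:R / #|[set x : {ffun 'I_n -> bool} | hweight x == k]|%:R.
Proof. by []. Qed.

Lemma frac_ge0 n (f : {ffun 'I_n -> bool} -> bool) k : 0 <= frac_ones R f k.
Proof. by rewrite fracE divr_ge0 ?ler0n. Qed.

Lemma frac0 n (f : {ffun 'I_n -> bool} -> bool) : fully_sensitive_at0 f ->
  frac_ones R f 0 = 0.
Proof.
move=> [f0 _].
rewrite fracE.
suff -> : [set x | (hweight (x : {ffun 'I_n -> bool}) == 0%N) && f x] = finset.set0.
  by rewrite cards0 mul0r.
apply/setP => x; rewrite !inE; apply/negbTE/negP => /andP[w fx].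
have ex : x = zero_pt n.
  apply/ffunP => j; rewrite ffunE; apply/negbTE/negP => xj.
  move: w; rewrite /hweight cards_eq0 => /eqP/setP/(_ j); rewrite !inE xj.
  done.
by move: fx; rewrite ex f0.
Qed.

Lemma frac1 n (f : {ffun 'I_n -> bool} -> bool) : (0 < n)%N -> fully_sensitive_at0 f ->
  frac_ones R f 1 = 1.
Proof.
move=> n0 [_ f1].
rewrite fracE.
have hu : forall i : 'I_n, hweight (unit_pt i) = 1%N.
  move=> i; rewrite /hweight (_ : [set j | unit_pt i j] = [set i]) ?cards1 //.
  by apply/setP => j; rewrite !inE ffunE.
rewrite (_ : [set x | (hweight (x : {ffun 'I_n -> bool}) == 1%N) && f x] =
   [set x | hweight (x : {ffun 'I_n -> bool}) == 1%N]).
  apply: divff; rewrite pnatr_eq0 -lt0n card_gt0; apply/set0Pn.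
  by exists (unit_pt (Ordinal n0)); rewrite inE hu.
apply/setP => x; rewrite !inE; case: eqP => //= /eqP /cards1P [i ei].
have -> : x = unit_pt i.
  apply/ffunP => j; rewrite ffunE; have := congr1 (fun S : {set 'I_n} => j \in S) ei; rewrite /= !inE.
  by move=> ->.
exact: f1.
Qed.

End S.
Arguments Dl {R}.

Local Open Scope classical_set_scope.

Theorem lemma2 (R : realType) (n : nat) (f : {ffun 'I_n -> bool} -> bool) (p : {poly R}) :
  (4 <= n)%N ->
  fully_sensitive_at0 f ->
  symmetrization_poly f p ->
  1 - p.[3%:R] <= sup [set `|(p^`(3)).[x]| | x in `[0, n%:R]].
Proof.
move=> n4 fs [sz pk].
set S := [set `|(p^`(3)).[x]| | x in `[0, n%:R]].
have inS : forall c : R, 0 <= c <= n%:R -> S `|(p^`(3)).[c]|.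
  move=> c hc; exists c => //.
have hs : has_sup S.
  split; first by exists `|(p^`(3)).[0]|; apply: inS; rewrite lexx ler0n.
  have [ub hub] := @poly_itv_bound _ (p^`(3)) 0 n%:R.
  exists ub => y [x hx <-]; apply: hub.
  by move: hx; rewrite /= in_itv /=.
have [c0 /andP[c0l c0u] e0] := @key _ 3 p 0%:R.
have [c1 /andP[c1l c1u] e1] := @key _ 3 p 1%:R.
have b0 : `|(iter 3 Dl p).[0%:R]| <= sup S.
  rewrite e0; apply: sup_upper_bound => //; apply: inS.
  rewrite -natrD in c0u; rewrite (le_trans _ c0l) ?ler0n //=.
  by rewrite (le_trans c0u) // ler_nat; lia.
have b1 : `|(iter 3 Dl p).[1%:R]| <= sup S.
  rewrite e1; apply: sup_upper_bound => //; apply: inS.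
  rewrite -natrD in c1u; rewrite (le_trans _ c1l) ?ler0n //=.
  by rewrite (le_trans c1u) // ler_nat; lia.
have D0 := @D3 _ p 0; have D1 := @D3 _ p 1.
rewrite -[(0+3)%N]/3%N -[(0+2)%N]/2%N -[(0+1)%N]/1%N in D0.
rewrite -[(1+3)%N]/4%N -[(1+2)%N]/3%N -[(1+1)%N]/2%N in D1.
have p0 : p.[0%:R] = 0 by rewrite pk ?frac0.
have p1 : p.[1%:R] = 1 by rewrite pk ?frac1 //; lia.
have p4 : 0 <= p.[4%:R] by rewrite pk ?frac_ge0.
have n0 := ler_norm (iter 3 Dl p).[0%:R].
have n1 := ler_norm (iter 3 Dl p).[1%:R].
rewrite D0 p0 p1 in n0 b0; rewrite D1 p1 in n1 b1.
lra.
Qed.
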